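(* Let $G$ be a strongly observable directed graph on $K$ vertices with independence number $\alpha$. The set $D$ returned by the procedure OODS (described in the context) on input $G$ satisfies $|D|\le\lceil\alpha(1+2\ln(K/\alpha))\rceil$. Moreover, if $G$ is acyclic or undirected, then $|D|\le\alpha$.
   Context: A directed graph $G=([K],E)$ (self-loops allowed) is strongly observable if every vertex either has a self-loop or has incoming edges from all other vertices. The independence number $\alpha$ is the maximum size of a set of vertices no two distinct members of which are joined by an edge (in either direction). An undirected graph is treated as the directed graph with both orientations of each edge. A ''no-root vertex'' is a vertex with no incoming edges other than its self-loop. The out-neighbors of a vertex $u$ are the vertices $w$ with $(u,w)\in E$; the out-degree is their number. Procedure OODS: start with $D=\emptyset$. While $G$ is nonempty: if $G$ (currently) is acyclic, add all no-root vertices to $D$ and remove them and their out-neighbors from $G$; otherwise, select a vertex of largest out-degree in $G$, add it to $D$, and remove it and its out-neighbors from $G$. Return $D$. *)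

(* Defs.v *)
From HB Require Import structures.
From mathcomp Require Import all_boot all_order all_algebra.
From mathcomp Require Import reals exp.
Set Implicit Arguments. Unset Strict Implicit. Unset Printing Implicit Defensive.

Section OODS.
Variables (T : finType) (E : rel T).
(* A directed graph G = (T, E); self-loops allowed (E v v). K = #|T|. *)

Definition strongly_observable : Prop :=
  forall v : T, E v v \/ (forall u : T, u != v -> E u v).

Definition independent (A : {set T}) : bool :=
  [forall x in A, forall y in A, (x != y) ==> ~~ E x y].

Definition alpha : nat := \max_(A : {set T} | independent A) #|A|.

Definition undirected : Prop := forall x y, E x y = E y x.

Definition sub_edge (S : {set T}) : rel T :=
  fun x y => [&& x \in S, y \in S, x != y & E x y].

Definition acyclic (S : {set T}) : bool :=
  [forall x, forall y, sub_edge S x y ==> ~~ connect (sub_edge S) y x].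

Definition outN (S : {set T}) (u : T) : {set T} := [set w in S | E u w].
Definition outdeg (S : {set T}) (u : T) : nat := #|outN S u|.

Definition noroot (S : {set T}) (v : T) : bool :=
  (v \in S) && [forall u in S, (u != v) ==> ~~ E u v].

Definition noroots (S : {set T}) : {set T} := [set v | noroot S v].

(* oods_run S D : starting from current vertex set S, procedure OODS can
   (for some tie-breaking) add exactly the vertices of D before terminating. *)
Inductive oods_run : {set T} -> {set T} -> Prop :=
| oods_stop : oods_run set0 set0
| oods_acyc S D :
    S != set0 -> acyclic S ->
    oods_run (S :\: (noroots S :|: \bigcup_(u in noroots S) outN S u)) D ->
    oods_run S (noroots S :|: D)
| oods_greedy S u D :
    S != set0 -> ~~ acyclic S -> u \in S ->
    (forall v, v \in S -> outdeg S v <= outdeg S u) ->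
    oods_run (S :\: (u |: outN S u)) D ->
    oods_run S (u |: D).

Definition OODS_output (D : {set T}) : Prop := oods_run [set: T] D.

End OODS.

(* Main.v *)
From Stdlib Require Import Lia ZArith.
Lemma arithZ (n s k A B : Z) : (0 < B -> 0 <= k -> n*n <= k*B -> B = A - s*s ->
  (n+s)*(n+s) <= (k+1)*A)%Z.
Proof.
intros hB hk h1 hBA.
assert (h2 := Z.square_nonneg (A - (n+s)*s)).
assert (e : (B * ((k+1)*A - (n+s)*(n+s)) = A*(k*B - n*n) + (A - (n+s)*s)*(A - (n+s)*s))%Z) by (subst B; ring).
assert (hA : (0 <= A)%Z) by (pose proof (Z.square_nonneg s); lia).
assert (h4 : (0 <= A*(k*B - n*n))%Z) by (apply Z.mul_nonneg_nonneg; lia).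
assert (h3 : (0 <= B * ((k+1)*A - (n+s)*(n+s)))%Z) by lia.
assert (h5 : (0 <= ((k+1)*A - (n+s)*(n+s)))%Z).
 { destruct (Z_le_gt_dec 0 ((k+1)*A - (n+s)*(n+s))) as [|g]; auto.
   assert ((B * ((k+1)*A - (n+s)*(n+s)) < 0)%Z) by (apply Z.mul_pos_neg; lia). lia. }
lia.
Qed.

Lemma arithR (n l a k M b S Ds : Z) : (0 <= n -> 0 <= l -> 1 <= a -> 0 <= k <= a ->
  0 <= Ds -> 0 <= S -> 0 <= M -> n*n <= k*(Ds+n) -> Ds <= 2*S -> S + n*(1+l) <= n*M ->
  (0 < n \/ (n = 0 /\ b = 1 /\ l <= M + 1)) -> 0 <= b -> n + l + a <= 2*a*(b+M))%Z.
Proof.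
intros hn hl ha hk hD hS hM h1 h2 h3 hc hb.
destruct hc as [np|[-> [-> hlM]]].
- assert (h4 : (k*(Ds+n) <= a*(Ds+n))%Z) by (apply Z.mul_le_mono_nonneg_r; lia).
  assert (h45 : (Ds + n <= n*(2*M - 1 - 2*l))%Z) by lia.
  assert (h5 : (a*(Ds+n) <= a*(n*(2*M - 1 - 2*l)))%Z) by (apply Z.mul_le_mono_nonneg_l; lia).
  assert (h6 : (n <= a*(2*M - 1 - 2*l))%Z).
  { destruct (Z_le_gt_dec n (a*(2*M - 1 - 2*l))) as [|g]; auto.
    assert ((n*(a*(2*M - 1 - 2*l)) < n*n)%Z) by (apply Z.mul_lt_mono_pos_l; lia). lia. }
  nia.
- assert ((M + 1 <= a*(M+1))%Z) by nia. nia.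
Qed.
Require Import Defs.
From HB Require Import structures.
From mathcomp Require Import all_boot all_order all_algebra.
From mathcomp Require Import reals exp.
From mathcomp Require Import ring lra zify.
Set Implicit Arguments. Unset Strict Implicit. Unset Printing Implicit Defensive.

Lemma indepP (T : finType) (E : rel T) (I : {set T}) :
  reflect (forall x y, x \in I -> y \in I -> x != y -> ~~ E x y) (independent E I).
Proof.
apply: (iffP forall_inP) => [H x y xI yI nxy | H x xI].
  by move/forall_inP: (H x xI) => /(_ y yI) /implyP; apply.
by apply/forall_inP => y yI; apply/implyP; apply: H.
Qed.

Lemma indepE (T : finType) (E : rel T) (I : {set T}) x y :
  independent E I -> x \in I -> y \in I -> x != y -> ~~ E x y.
Proof. by move/indepP; apply. Qed.

Lemma indep_sub (T : finType) (E : rel T) (I J : {set T}) :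
  I \subset J -> independent E J -> independent E I.
Proof.
move=> /subsetP sIJ /indepP H; apply/indepP => x y xI yI; apply: H; exact: sIJ.
Qed.

Lemma indep_alpha (T : finType) (E : rel T) (I : {set T}) :
  independent E I -> (#|I| <= alpha E)%N.
Proof. by move=> H; rewrite /alpha; apply: (@leq_bigmax_cond _ (fun A => independent E A) (fun A => #|A|)). Qed.

Lemma alpha_ex (T : finType) (E : rel T) :
  exists I, independent E I /\ #|I| = alpha E.
Proof.
have h0 : (0 < #|independent E|)%N.
  apply/card_gt0P; exists set0; rewrite unfold_in; apply/indepP => x y; by rewrite inE.
case: (eq_bigmax_cond (fun A : {set T} => #|A|) h0) => I IA HI.
by exists I; split => //; rewrite /alpha HI.
Qed.

Lemma alpha_gt0 (T : finType) (E : rel T) : (0 < #|T|)%N -> (0 < alpha E)%N.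
Proof.
case/card_gt0P => x _; apply: (@leq_trans #|[set x]|); first by rewrite cards1.
apply: indep_alpha; apply/indepP => a b; rewrite !inE => /eqP -> /eqP ->.
by rewrite eqxx.
Qed.

Lemma acyclic_sub (T : finType) (E : rel T) (S' S : {set T}) :
  S' \subset S -> acyclic E S -> acyclic E S'.
Proof.
move=> /subsetP sub /forallP H; apply/forallP => x; apply/forallP => y.
apply/implyP => /and4P [xS yS nxy Exy].
have se : subrel (sub_edge E S') (connect (sub_edge E S)).
  move=> a b /and4P [aS bS nab Eab]; apply: connect1.
  by rewrite /sub_edge (sub _ aS) (sub _ bS) nab Eab.
move/forallP: (H x) => /(_ y) /implyP.
rewrite /sub_edge (sub _ xS) (sub _ yS) nxy Exy => /(_ isT).
by apply: contra => /(connect_sub se).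
Qed.

Lemma noroots_indep (T : finType) (E : rel T) S : independent E (noroots E S).
Proof.
apply/indepP => x y; rewrite !inE => /andP [xS _] /andP [yS /forall_inP Hy] nxy.
by move/implyP: (Hy x xS); apply.
Qed.

Lemma runA (T : finType) (E : rel T) S D : oods_run E S D ->
  D \subset S /\ ((acyclic E S \/ undirected E) -> independent E D).
Proof.
elim => {S D} [|S D S0 acS _ [sub IH]|S u D S0 nacS uS umax _ [sub IH]].
- by split => // _; apply/indepP => x y; rewrite inE.
- split.
    rewrite subUset; apply/andP; split.
      by apply/subsetP => x; rewrite inE => /andP [].
    by apply: (subset_trans sub); apply: subsetDl.
  move=> _. have iD := IH (or_introl (acyclic_sub (subsetDl _ _) acS)).
  apply/indepP => x y; rewrite !in_setU => /orP [xN|xD] /orP [yN|yD] nxy.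
  + exact: (indepE (noroots_indep E S) xN yN nxy).
  + move/subsetP: sub => /(_ y yD); rewrite !inE negb_or => /andP [/andP [_ ynb] yS].
    apply: contra ynb => Exy; apply/bigcupP; exists x => //; by rewrite inE yS.
  + move: yN; rewrite inE => /andP [_ /forall_inP H].
    move/subsetP: sub => /(_ x xD); rewrite !inE => /andP [_ xS].
    by move/implyP: (H x xS); apply.
  + exact: (indepE iD xD yD nxy).
- split.
    rewrite subUset sub1set uS /=; apply: (subset_trans sub); apply: subsetDl.
  case => [acS|und]; first by rewrite acS in nacS.
  have iD := IH (or_intror und).
  have cross : forall y, y \in D -> ~~ E u y.
    move=> y yD; move/subsetP: sub => /(_ y yD); rewrite !inE negb_or => /andP [/andP [_ H] yS].
    by apply: contra H => Euy; rewrite yS Euy.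
  apply/indepP => x y; rewrite !inE => /orP [/eqP->|xD] /orP [/eqP->|yD] nxy.
  + by rewrite eqxx in nxy.
  + exact: cross.
  + by rewrite und; apply: cross.
  + exact: (indepE iD xD yD nxy).
Qed.

Lemma arith_cw (n' d k D D' : nat) :
  (n' * n' <= k * (D' + n'))%N -> (D' + d.+1 * d <= D)%N ->
  ((n' + d.+1) * (n' + d.+1) <= k.+1 * (D + (n' + d.+1)))%N.
Proof.
move=> h1 h2.
case: (posnP (D' + n')) => B0.
  have n0 : n' = 0%N by lia.
  rewrite n0 add0n mulSn; nia.
have H := @arithZ (Z.of_nat n') (Z.of_nat d.+1) (Z.of_nat k) (Z.of_nat (D + (n' + d.+1))) (Z.sub (Z.of_nat (D + (n' + d.+1))) (Z.mul (Z.of_nat d.+1) (Z.of_nat d.+1))).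
have hk : Z.le (Z.mul (Z.of_nat n') (Z.of_nat n')) (Z.mul (Z.of_nat k) (Z.sub (Z.of_nat (D + (n' + d.+1))) (Z.mul (Z.of_nat d.+1) (Z.of_nat d.+1)))).
  have : (k * (D' + n') <= k * (D + (n' + d.+1) - d.+1 * d.+1))%N.
    rewrite leq_mul2l; apply/orP; right. lia.
  lia.
have := H ltac:(lia) ltac:(lia) hk erefl.
lia.
Qed.

Definition adjU (T : finType) (E : rel T) (x y : T) : bool := (x != y) && (E x y || E y x).
Definition deg (T : finType) (E : rel T) (V : {set T}) (x : T) : nat :=
  #|[set y in V | adjU E x y]|.
Definition Dsum (T : finType) (E : rel T) (V : {set T}) : nat := \sum_(x in V) deg E V x.

Lemma card_set_sum (T : finType) (V : {set T}) (P : pred T) :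
  #|[set y in V | P y]| = \sum_(y in V) (P y : nat).
Proof.
rewrite -sum1_card big_mkcond [RHS]big_mkcond /=; apply: eq_bigr => y _.
by rewrite inE; case: (y \in V); case: (P y).
Qed.

Lemma caro_wei (T : finType) (E : rel T) (V : {set T}) :
  exists I : {set T}, [/\ I \subset V, independent E I &
    (#|V| * #|V| <= #|I| * (Dsum E V + #|V|))%N].
Proof.
have [n] := ubnP #|V|; elim: n V => // n IH V.
case: (set_0Vmem V) => [->|[v0 v0V]] Vn.
  exists set0; split; rewrite ?sub0set ?cards0 //.
  by apply/indepP => x y; rewrite inE.
have [v vV vmin] := @arg_minnP _ v0 (fun x => x \in V) (deg E V) v0V.
set Nb := [set y in V | adjU E v y].
set N := v |: Nb.
have vNb : v \notin Nb by rewrite inE /adjU eqxx andbF.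
have cardN : #|N| = (deg E V v).+1 by rewrite cardsU1 vNb.
have NV : N \subset V.
  by rewrite subUset sub1set vV; apply/subsetP => y; rewrite inE => /andP [].
have cardV : #|V| = (#|V :\: N| + #|N|)%N.
  by rewrite -(cardsID N V) (setIidPr NV) addnC.
have lt : (#|V :\: N| < n)%N.
  move: Vn; rewrite cardV cardN; lia.
have [I' [I'sub I'ind I'card]] := IH _ lt.
exists (v |: I').
have vI' : v \notin I'.
  apply/negP => /(subsetP I'sub); rewrite !inE eqxx; by [].
split.
- by rewrite subUset sub1set vV; apply: (subset_trans I'sub); apply: subsetDl.
- apply/indepP => x y; rewrite !inE.
  have cr : forall z, z \in I' -> z != v -> ~~ E v z && ~~ E z v.
    move=> z zI zv; have := subsetP I'sub z zI; rewrite in_setD in_setU1 negb_or.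
    case/andP => /andP [_ znb] zV; move: znb; rewrite inE zV /= /adjU eq_sym zv /=.
    by rewrite negb_or.
  move=> /orP [/eqP->|xI] /orP [/eqP->|yI] nxy.
  + by rewrite eqxx in nxy.
  + by rewrite eq_sym in nxy; case/andP: (cr y yI nxy).
  + by case/andP: (cr x xI nxy).
  + exact: (indepE I'ind xI yI nxy).
- have hD : (Dsum E (V :\: N) + (deg E V v).+1 * deg E V v <= Dsum E V)%N.
    rewrite /Dsum [X in (_ <= X)%N](big_setID N) /= [X in (_ <= X)%N]addnC; apply: leq_add.
      apply: leq_sum => x _; apply: subset_leq_card; apply/subsetP => y.
      by rewrite !inE => /andP [/andP [_ ->] ->].
    rewrite (setIidPr NV) -cardN -sum_nat_const; apply: leq_sum => x xN.
    by apply: vmin; apply: (subsetP NV).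
  rewrite cardsU1 vI' add1n cardV cardN.
  exact: (arith_cw I'card hD).
Qed.

Lemma arith_rem (n l a k M b S Ds : nat) : (0 < a)%N -> (k <= a)%N ->
  (n*n <= k*(Ds+n))%N -> (Ds <= 2*S)%N -> (S + n*(1+l) <= n*M)%N ->
  (0 < n \/ (n = 0 /\ b = 1 /\ l <= M + 1))%N -> (n + l + a <= 2*a*(b+M))%N.
Proof.
move=> ha hk h1 h2 h3 hc.
have := @arithR (Z.of_nat n) (Z.of_nat l) (Z.of_nat a) (Z.of_nat k) (Z.of_nat M) (Z.of_nat b) (Z.of_nat S) (Z.of_nat Ds).
move=> H. have : Z.le (Z.of_nat (n + l + a)) (Z.of_nat (2*a*(b+M))).
  rewrite !Nat2Z.inj_add !Nat2Z.inj_mul !Nat2Z.inj_add in H *.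
  apply: H; try lia.
  all: try (case: hc => [h|[h [h1 h1']]]; [left|right]; lia).
lia.
Qed.

Lemma double_count (T : finType) (E : rel T) (V : {set T}) :
  (Dsum E V <= 2 * \sum_(x in V) #|[set y in V | (x != y) && E x y]|)%N.
Proof.
rewrite /Dsum mul2n -addnn.
have e : \sum_(x in V) #|[set y in V | (x != y) && E x y]| =
         \sum_(x in V) \sum_(y in V) ((y != x) && E y x : nat).
  rewrite (exchange_big _ _ _ (fun x => x \in V) (fun y => y \in V)) /=.
  by apply: eq_bigr => x _; rewrite card_set_sum.
rewrite {2}e -big_split /=; apply: leq_sum => x _.
rewrite /deg card_set_sum card_set_sum -big_split /=; apply: leq_sum => y _.
rewrite /adjU eq_sym; case: (y != x); case: (E x y); case: (E y x) => //.
Qed.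

Lemma removal (T : finType) (E : rel T) (S : {set T}) (u : T) :
  strongly_observable E -> u \in S ->
  (forall v, v \in S -> (outdeg E S v <= outdeg E S u)%N) ->
  (#|S| + alpha E <= 2 * alpha E * #|u |: outN E S u|)%N.
Proof.
move=> so uS umax.
have a0 : (0 < alpha E)%N by apply: alpha_gt0; apply/card_gt0P; exists u.
set L := [set v in S | ~~ E v v].
set V := S :\: L.
have LS : L \subset S by apply/subsetP => y; rewrite inE => /andP [].
have cardS : #|S| = (#|V| + #|L|)%N by rewrite -(cardsID L S) (setIidPr LS) addnC.
have [I [IV Iind Icard]] := caro_wei E V.
have Ia := indep_alpha Iind.
set onl := fun x => #|[set y in V | (x != y) && E x y]|.
have dc := double_count E V.
have inL : forall v y, v \in S -> y \in L -> v != y -> E v y.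
  move=> v y vS; rewrite inE => /andP [yS nyy] nvy.
  case: (so y) => [Eyy|H]; first by rewrite Eyy in nyy.
  exact: H.
have bound : forall v, v \in V -> (onl v + 1 + #|L| <= outdeg E S u)%N.
  move=> v vV; apply: leq_trans (umax v _); last by move: vV; rewrite inE => /andP [].
  have vS : v \in S by move: vV; rewrite inE => /andP [].
  have Evv : E v v by move: vV; rewrite !inE vS andbT negbK.
  set A := v |: [set y in V | (v != y) && E v y].
  have vnA : v \notin [set y in V | (v != y) && E v y] by rewrite inE eqxx andbF.
  have AL : A :&: L = set0.
    apply/setP => y; rewrite !inE; case: (y =P v) => [->|_] /=; first by rewrite Evv !andbF.
    by case: (y \in S); case: (E y y); rewrite /= ?andbF ?andbT.
  have sub : A :|: L \subset outN E S v.
    apply/subsetP => y; rewrite !inE => /orP [/orP [/eqP->|/andP [/andP [_ yS] /andP [_ Evy]]]|yL].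
    - by rewrite vS Evv.
    - by rewrite yS Evy.
    - case/andP: yL => yS nyy.
      rewrite yS /=; apply: inL => //; first by rewrite inE yS nyy.
      by apply/eqP => evy; rewrite -evy Evv in nyy.
  have := subset_leq_card sub; rewrite /outdeg.
  have := cardsUI A L; rewrite AL cards0 addn0 => ->.
  by rewrite /A cardsU1 vnA /onl; lia.
have sumb : (\sum_(v in V) onl v + #|V| * (1 + #|L|) <= #|V| * outdeg E S u)%N.
  rewrite -!sum_nat_const -big_split /=; apply: leq_sum => v vV.
  by have := bound v vV; lia.
rewrite cardS.
have -> : #|u |: outN E S u| = ((~~ E u u) + outdeg E S u)%N.
  by rewrite cardsU1 /outdeg inE uS.
suff : (#|V| + #|L| + alpha E <= 2 * alpha E * ((~~ E u u) + outdeg E S u))%N by lia.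
apply: (@arith_rem _ _ _ #|I| _ _ (\sum_(v in V) onl v) (Dsum E V)) => //.
- case: (posnP #|V|) => [V0|]; [right|by left].
  have uL : u \in L.
    apply/negPn/negP => unL; suff uV : u \in V by move: uV; rewrite (card0_eq V0).
    by rewrite inE unL uS.
  have nuu : ~~ E u u by move: uL; rewrite inE => /andP [].
  split => //; split; first by rewrite nuu.
  have sub : L :\ u \subset outN E S u.
    apply/subsetP => y; rewrite !inE => /andP [nyu /andP [yS nyy]].
    rewrite yS /=; apply: inL => //; first by rewrite inE yS nyy.
    by rewrite eq_sym.
  have := subset_leq_card sub; have := cardsD1 u L; rewrite uL /outdeg; lia.
Qed.

Import Order.TTheory GRing.Theory Num.Theory.
Local Open Scope ring_scope.

Lemma ln_le_sub1 (R : realType) (x : R) : 0 < x -> ln x <= x - 1.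
Proof.
move=> x0; have := @le_ln1Dx R (x - 1); have -> : 1 + (x - 1) = x by ring.
by apply; lra.
Qed.

Definition Phi (R : realType) (a n : nat) : R :=
  if (n <= 2 * a)%N then n%:R / 2
  else 2 * a%:R * ln ((n + a)%:R / (3 * a)%:R) + a%:R + 1.

Lemma Phi_step (R : realType) (a n r : nat) : (0 < a)%N -> (2 <= r)%N -> (r <= n)%N ->
  (n + a <= 2 * a * r)%N -> 1 + Phi R a (n - r) <= Phi R a n.
Proof.
move=> a0 r2 rn key.
have A0 : (0 : R) < a%:R by rewrite ltr0n.
have R2 : (2 : R) <= r%:R by rewrite ler_nat.
have eB : (n - r)%:R = n%:R - r%:R :> R by rewrite natrB.
have keyR : n%:R + a%:R <= 2 * a%:R * r%:R :> R.
  by rewrite -natrD -[2]/(2%:R) -!natrM ler_nat.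
rewrite /Phi; case: ifP => h1; case: ifP => h2.
- rewrite eB; lra.
- have hl : 0 <= ln ((n + a)%:R / (3 * a)%:R : R).
    apply: ln_ge0; rewrite ler_pdivlMr ?mul1r ?ltr0n ?muln_gt0 // ler_nat.
    move/negbT: h2; rewrite -ltnNge; lia.
  have : (n - r)%:R / 2 <= (a%:R : R).
    rewrite ler_pdivrMr //; move: h1; rewrite -(ler_nat R) natrM mulrC => h1; lra.
  have : 0 <= 2 * a%:R * ln ((n + a)%:R / (3 * a)%:R : R) by apply: mulr_ge0 => //; lra.
  lra.
- by rewrite (leq_trans (leq_subr r n) h2) in h1.
- set N : R := (n + a)%:R. set c : R := (3 * a)%:R.
  have c0 : 0 < c by rewrite ltr0n muln_gt0.
  have eP : (n - r + a)%:R = N - r%:R :> R by rewrite natrD eB /N natrD; ring.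
  have N0 : 0 < N by rewrite ltr0n addn_gt0 a0 orbT.
  have P0 : 0 < N - r%:R by rewrite -eP ltr0n addn_gt0 a0 orbT.
  have split : (N - r%:R) / c = ((N - r%:R) / N) * (N / c).
    by field; rewrite pnatr_eq0 -lt0n a0 /= -natrD pnatr_eq0 -lt0n addn_gt0 a0 orbT.
  rewrite eP split lnM; last by rewrite posrE divr_gt0.
  2: by rewrite posrE divr_gt0.
  have hl := ln_le_sub1 (divr_gt0 P0 N0).
  have e : (N - r%:R) / N - 1 = - (r%:R / N).
    by field; rewrite -natrD pnatr_eq0 -lt0n addn_gt0 a0 orbT.
  rewrite e in hl.
  have : 1 <= 2 * a%:R * (r%:R / N).
    by rewrite mulrA ler_pdivlMr // mul1r /N natrD.
  set L1 := ln ((N - r%:R) / N). set L2 := ln (N / c).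
  move=> h; have : 2 * a%:R * L1 <= 2 * a%:R * (- (r%:R / N)).
    by apply: ler_wpM2l => //; lra.
  lra.
Qed.

Lemma ln2_ge (R : realType) : 1 / 2 <= ln (2 : R).
Proof.
have h := @ln_le_sub1 R (1/2) ltac:(lra).
have : ln (1/2 : R) = - ln 2.
  by rewrite mul1r -lnV // posrE.
lra.
Qed.

Lemma final_bound (R : realType) (K a g : nat) : (0 < a)%N -> (g + a <= K)%N ->
  g%:R <= Phi R a K -> g%:R - 1 < 2 * a%:R * ln (K%:R / a%:R : R).
Proof.
move=> a0 gK.
have A0 : (0 : R) < a%:R by rewrite ltr0n.
have K0 : (0 : R) < K%:R by rewrite ltr0n; apply: leq_trans gK; rewrite addn_gt0 a0 orbT.
have gKR : g%:R + a%:R <= K%:R :> R by rewrite -natrD ler_nat.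
have g0 : 0 <= g%:R :> R by rewrite ler0n.
rewrite /Phi; case: ifP => h.
- move=> _.
  have hK : K%:R <= 2 * a%:R :> R by rewrite -[2]/(2%:R) -natrM ler_nat.
  have l1 : ln (a%:R / K%:R : R) <= a%:R / K%:R - 1 by apply: ln_le_sub1; apply: divr_gt0.
  have l2 : ln (a%:R / K%:R : R) = - ln (K%:R / a%:R) by rewrite -lnV ?invf_div // posrE divr_gt0.
  have e : 2 * a%:R * (1 - a%:R / K%:R) = (K%:R - a%:R) * (2 * a%:R / K%:R) :> R.
    by field; rewrite gt_eqF.
  have h2 : 1 <= 2 * a%:R / K%:R :> R by rewrite ler_pdivlMr // mul1r.
  have h3 : (K%:R - a%:R) * 1 <= (K%:R - a%:R) * (2 * a%:R / K%:R) :> R.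
    by apply: ler_wpM2l => //; lra.
  have h4 : 2 * a%:R * (1 - a%:R / K%:R) <= 2 * a%:R * ln (K%:R / a%:R) :> R.
    by apply: ler_wpM2l => //; lra.
  lra.
- have hK : 2 * a%:R < K%:R :> R.
    by rewrite -[2]/(2%:R) -natrM ltr_nat ltnNge h.
  have e : ln (K%:R / a%:R) - ln ((K + a)%:R / (3 * a)%:R) = ln (3 * K%:R / (K%:R + a%:R) : R).
    rewrite -ln_div; first (congr ln; rewrite natrD natrM; field).
    + by apply/andP; split; rewrite gt_eqF //; lra.
    + by rewrite posrE divr_gt0.
    + by rewrite posrE divr_gt0 // ltr0n ?addn_gt0 ?muln_gt0 a0 ?orbT.
  have l2 : ln 2 < ln (3 * K%:R / (K%:R + a%:R) : R).
    have p1 : 0 < 3 * K%:R / (K%:R + a%:R) :> R by apply: divr_gt0; lra.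
    rewrite ltr_ln ?posrE //; first by rewrite ltr_pdivlMr; lra.
  have l3 := ln2_ge R.
  have h5 : 2 * a%:R * (1/2) < 2 * a%:R * ln (3 * K%:R / (K%:R + a%:R) : R).
    by rewrite ltr_pM2l; lra.
  have e2 : 2 * a%:R * ln (K%:R / a%:R) = 2 * a%:R * ln ((K + a)%:R / (3 * a)%:R)
     + 2 * a%:R * ln (3 * K%:R / (K%:R + a%:R) : R) by rewrite -e; ring.
  move=> hg; lra.
Qed.

Lemma Phi_ge0 (R : realType) (a n : nat) : (0 < a)%N -> 0 <= Phi R a n.
Proof.
move=> a0; rewrite /Phi; case: ifP => h; first by rewrite divr_ge0 ?ler0n.
have A0 : (0 : R) <= a%:R by rewrite ler0n.
have hl : 0 <= ln ((n + a)%:R / (3 * a)%:R : R).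
  apply: ln_ge0; rewrite ler_pdivlMr ?mul1r ?ltr0n ?muln_gt0 // ler_nat.
  move/negbT: h; rewrite -ltnNge; lia.
have : 0 <= 2 * a%:R * ln ((n + a)%:R / (3 * a)%:R : R) by apply: mulr_ge0 => //; lra.
lra.
Qed.

Lemma pair_lem (T : finType) (E : rel T) (S : {set T}) (u : T) :
  strongly_observable E -> ~~ acyclic E S -> u \in S ->
  (forall v, v \in S -> (outdeg E S v <= outdeg E S u)%N) ->
  exists2 x, x \in outN E S u & x != u.
Proof.
move=> so nac uS umax.
move/forallPn: nac => [x /forallPn [y]]; rewrite negb_imply => /andP [/and4P [xS yS nxy Exy] _].
case: (eqVneq u x) => [->|nux].
  by exists y; rewrite ?inE ?yS ?Exy // eq_sym.
case Eux: (E u x).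
  by exists x; rewrite ?inE ?xS ?Eux // eq_sym.
have Exx : E x x.
  case: (so x) => // H; by rewrite H in Eux.
have : (2 <= outdeg E S x)%N.
  have sub : [set x; y] \subset outN E S x.
    by apply/subsetP => z; rewrite !inE => /orP [/eqP->|/eqP->]; rewrite ?xS ?Exx ?yS ?Exy.
  by have := subset_leq_card sub; rewrite cards2 nxy.
move/leq_trans/(_ (umax x xS)) => h2.
case: (boolP (outN E S u \subset [set u])) => [sub|].
  by exfalso; move: h2; rewrite /outdeg; have := subset_leq_card sub; rewrite cards1; lia.
case/subsetPn => z zo; rewrite inE => nzu; by exists z.
Qed.

Lemma runB (R : realType) (T : finType) (E : rel T) (S D : {set T}) :
  strongly_observable E -> oods_run E S D ->
  exists g : nat, [/\ (#|D| <= g + alpha E)%N,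
    (forall I : {set T}, I \subset S -> independent E I -> (g + #|I| <= #|S|)%N) &
    (g%:R <= Phi R (alpha E) #|S|)].
Proof.
move=> so H; elim: H => {S D} [|S D S0 acS H _|S u D S0 nacS uS umax H [g' [hD hI hP]]].
- exists 0%N; split.
  + by rewrite cards0.
  + by move=> I; rewrite subset0 => /eqP ->.
  + rewrite cards0 /Phi leq0n mul0r; lra.
- have a0 : (0 < alpha E)%N.
    apply: alpha_gt0; case/set0Pn: S0 => x _; apply/card_gt0P; by exists x.
  exists 0%N; split.
  + have [_ ind] := runA (oods_acyc S0 acS H).
    by rewrite add0n; apply: indep_alpha; apply: ind; left.
  + by move=> I IS _; rewrite add0n; apply: subset_leq_card.
  + exact: Phi_ge0.
- have a0 : (0 < alpha E)%N by apply: alpha_gt0; apply/card_gt0P; exists u.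
  have [x xo nxu] := pair_lem so nacS uS umax.
  set Rm := u |: outN E S u in hI hP *.
  have RmS : Rm \subset S.
    by rewrite subUset sub1set uS; apply/subsetP => z; rewrite inE => /andP [].
  have cardS : #|S| = (#|S :\: Rm| + #|Rm|)%N.
    by rewrite -(cardsID Rm S) (setIidPr RmS) addnC.
  have r2 : (2 <= #|Rm|)%N.
    have sub : [set u; x] \subset Rm.
      by apply/subsetP => z; rewrite in_set2 => /orP [/eqP->|/eqP->]; [exact: setU11 | exact: setU1r].
    by have := subset_leq_card sub; rewrite cards2 eq_sym nxu.
  exists g'.+1; split.
  + by rewrite cardsU1; move: hD; case: (u \notin D) => /=; lia.
  + move=> I IS Iind.
    have h1 := hI (I :\: Rm) (setSD _ IS) (indep_sub (subsetDl _ _) Iind).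
    have h2 : (#|I :&: Rm| < #|Rm|)%N.
      apply: proper_card; apply/properP; split; first exact: subsetIr.
      case: (boolP (u \in I)) => uI.
        exists x; first by rewrite inE xo orbT.
        rewrite inE negb_and; apply/orP; left; apply/negP => xI.
        move: xo; rewrite inE => /andP [_ Eux].
        by rewrite eq_sym in nxu; have := indepE Iind uI xI nxu; rewrite Eux.
      by exists u; rewrite ?inE ?eqxx // negb_and uI.
    have := cardsID Rm I; lia.
  + have rem := removal so uS umax.
    have st := Phi_step R a0 r2 (subset_leq_card RmS) rem.
    move: hP; rewrite -natr1 (_ : #|S :\: Rm| = #|S| - #|Rm|)%N; last by lia.
    lra.
Qed.

Theorem lemma24 (R : realType) (T : finType) (E : rel T) (D : {set T}) :
  (0 < #|T|)%N ->
  strongly_observable E ->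
  OODS_output E D ->
  ((#|D|%:Z <=
      Num.ceil ((alpha E)%:R * (1 + 2 * ln ((#|T|%:R : R) / (alpha E)%:R)))) /\
   ((acyclic E [set: T] \/ undirected E) -> (#|D| <= alpha E)%N)).
Proof.
move=> T0 so HD; split; last first.
  by move=> h; have [_ ind] := runA HD; apply: indep_alpha; apply: ind.
have a0 := alpha_gt0 E T0.
have [g [hD hI hP]] := runB R so HD.
have [I [Iind Icard]] := alpha_ex E.
have gK : (g + alpha E <= #|T|)%N by rewrite -Icard -cardsT; apply: hI => //; apply: subsetT.
rewrite cardsT in hP.
have fb := final_bound a0 gK hP.
rewrite leNgt; apply/negP => hlt.
have : Num.ceil ((alpha E)%:R * (1 + 2 * ln ((#|T|%:R : R) / (alpha E)%:R))) <= #|D|%:Z - 1.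
  by rewrite -ltzD1 subrK.
rewrite ceil_le_int intrB /=.
have hDR : (#|D|%:R : R) <= g%:R + (alpha E)%:R by rewrite -natrD ler_nat.
set L := ln _.
have -> : ((Posz #|D|)%:~R : R) = #|D|%:R by [].
rewrite (_ : 1%:~R = 1) // mulrDr mulr1 mulrA; move=> hc.
rewrite -/L in fb; have e : (alpha E)%:R * 2 * L = 2 * (alpha E)%:R * L by ring.
clear -fb hc hDR e; lra.
Qed.
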